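(* Let $n\in\mathbb{N}$ and let $\boldsymbol{V}$ be a finite E-subspace of $\boldsymbol{Y}_n$. For every weak $n$-coloring on $\boldsymbol{V}$ there is a finite sequence $\boldsymbol{V}_0,\dots,\boldsymbol{V}_k$ of Esakia spaces such that: (i) $\boldsymbol{V}_0=\boldsymbol{V}$ and each $\boldsymbol{V}_{i+1}$ is obtained by applying a $\beta$-reduction $f_i\colon \boldsymbol{V}_i\to\boldsymbol{V}_{i+1}$ to $\boldsymbol{V}_i$; (ii) the kernel $\mathrm{Ker}(f_{k-1}\circ\cdots\circ f_0)$ does not identify any pair of elements of $\boldsymbol{V}$ of distinct color; (iii) for every $m\in\mathbb{N}$ such that $y_{m,0},\dots,y_{m,2^{n+1}-1}\in V$, there are $i<j$ such that $\langle y_{m,i},y_{m,j}\rangle\in\mathrm{Ker}(f_{k-1}\circ\cdots\circ f_0)$.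
   Context: $\mathbb{N}=\{0,1,2,\dots\}$. For $n\in\mathbb{N}$ let $P_n=\{y_{m,i}: m,i\in\mathbb{N},\ i\le 2^{n+1}-1\}$ (pairwise distinct elements) and define $y_{m,i}\prec y_{m-1,j}$ whenever $m\ge1$ and $i\ne j$ (and no other relations). $\boldsymbol{Y}_n$ is the root compactification of $P_n$ ordered by the reflexive transitive closure of $\prec$: a new least element $\bot$ is added and $U$ is declared open iff $\bot\notin U$ or $U$ is cofinite; it is an Esakia space. An E-subspace of an Esakia space is a closed upset with induced topology and order; finite ones are finite posets with the discrete topology. $\{0,1\}^n$ is ordered componentwise ($\{0,1\}^0$ has a single element). A weak $n$-coloring of a finite poset $\boldsymbol{V}$ is an order-preserving map $\boldsymbol{V}\to\{0,1\}^n$; the value at $x$ is the color of $x$. If $x\ne y$ are elements of a finite poset $\boldsymbol{W}$ with exactly the same immediate successors (an immediate successor of $x$ is a $z>x$ with nothing strictly between), the $\beta$-reduction identifying $x$ and $y$ is the quotient map from $\boldsymbol{W}$ to $\boldsymbol{W}/R$, where $R$ is the smallest equivalence relation identifying $x$ and $y$, and $\boldsymbol{W}/R$ is ordered by $u/R\sqsubseteq v/R$ iff $u'\le v'$ for some $u'\in u/R$, $v'\in v/R$. $\mathrm{Ker}(g)=\{\langle u,v\rangle: g(u)=g(v)\}$; for $k=0$ the composition is the identity. *)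

(* Defs.v *)
From HB Require Import structures.
From mathcomp Require Import all_boot.
From mathcomp Require Import finmap.
From Stdlib Require Import Relations.
Set Implicit Arguments. Unset Strict Implicit. Unset Printing Implicit Defensive.
Local Open Scope fset_scope.

(* Index set for i : {0,...,2^(n+1)-1} is 'I_(2^n.+1).
   Points of Y_n: None = bottom, Some (m, i) = y_{m,i}. *)
Definition Yn (n : nat) : Type := option (nat * 'I_(2 ^ n.+1)).

Definition Yprec (n : nat) (a b : Yn n) : Prop :=
  match a, b with
  | Some (m, i), Some (m', j) => m = m'.+1 /\ i <> j
  | _, _ => False
  end.

Definition Yle (n : nat) (a b : Yn n) : Prop :=
  a = None \/ clos_refl_trans (Yn n) (@Yprec n) a b.

Definition Yopen (n : nat) (U : Yn n -> Prop) : Prop :=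
  ~ U None \/ exists s : seq (Yn n), forall a, ~ U a -> a \in s.

Definition Yclosed (n : nat) (C : Yn n -> Prop) : Prop :=
  Yopen (fun a => ~ C a).

Definition finite_Esubspace (n : nat) (V : {fset Yn n}) : Prop :=
  Yclosed (fun a => a \in V) /\
  (forall a b : Yn n, a \in V -> Yle a b -> b \in V).

Record fposet := FPoset { fcar :> finType; fle : fcar -> fcar -> Prop }.

Definition is_poset (W : fposet) : Prop :=
  (forall x : W, fle x x) /\
  (forall x y : W, fle x y -> fle y x -> x = y) /\
  (forall x y z : W, fle x y -> fle y z -> fle x z).

Definition Esub (n : nat) (V : {fset Yn n}) : fposet :=
  @FPoset V (fun u v : V => Yle (val u) (val v)).

Definition imm_succ (W : fposet) (x z : W) : Prop :=
  fle x z /\ x <> z /\ ~ (exists w : W, fle x w /\ x <> w /\ fle w z /\ w <> z).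

(* f : W -> U is (up to the identification of U with W/R) the beta-reduction
   identifying two distinct elements x, y having the same immediate successors:
   f is surjective, its kernel is the smallest equivalence relation R
   identifying x and y, and U carries the quotient order
   f u ⊑ f v iff u' <= v' for some u' R u, v' R v. *)
Definition beta_reduction (W U : fposet) (f : W -> U) : Prop :=
  exists x y : W,
    [/\ x <> y,
        (forall z : W, imm_succ x z <-> imm_succ y z),
        (forall a : U, exists u : W, f u = a),
        (forall u v : W, f u = f v <-> (u = v \/ (u = x /\ v = y) \/ (u = y /\ v = x))) &
        (forall a b : U, fle a b <-> exists u v : W, [/\ f u = a, f v = b & fle u v])].

(* reduces_to W U g : there is a sequence W = V_0, ..., V_k = U of Esakia spaces
   (finite posets) with beta-reductions f_i : V_i -> V_{i+1}, and
   g = f_{k-1} o ... o f_0 (the identity when k = 0). *)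
Inductive reduces_to (W : fposet) : forall U : fposet, (W -> U) -> Prop :=
  | red_refl : reduces_to (fun x : W => x)
  | red_step (U U' : fposet) (g : W -> U) (f : U -> U') :
      reduces_to g -> is_poset U' -> beta_reduction f ->
      reduces_to (fun x => f (g x)).

Definition color (n : nat) := {ffun 'I_n -> bool}.
Definition color_le (n : nat) (a b : color n) : Prop := forall i, a i ==> b i.

Definition weak_coloring (n : nat) (W : fposet) (c : W -> color n) : Prop :=
  forall u v : W, fle u v -> color_le (c u) (c v).

(* Main.v *)
Require Import Defs.
From mathcomp Require Import all_boot.
From mathcomp Require Import finmap.
From Stdlib Require Import Relations Classical ClassicalEpsilon Lia.
From mathcomp Require Import zify.
Set Implicit Arguments. Unset Strict Implicit. Unset Printing Implicit Defensive.

Section Generic.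
Variable W : fposet.
Hypothesis HW : is_poset W.

Definition bP (P : Prop) : bool := if excluded_middle_informative P then true else false.
Lemma bPP P : reflect P (bP P).
Proof. rewrite /bP; case: excluded_middle_informative => h; constructor; done. Qed.

Definition slt (x z : W) := fle x z /\ x <> z.

Lemma exists_imm (x w : W) : slt x w -> exists z, imm_succ x z /\ fle z w.
Proof.
move=> hxw; have [k hk] := ubnP #|[pred s : W | bP (fle s w)]|.
elim: k w hk hxw => // k IH w hk hxw.
case: (classic (imm_succ x w)) => [h|h]; first by exists w; split=>//; apply HW.
have [t [hxt [hxt' [htw htw']]]] : exists t, fle x t /\ x <> t /\ fle t w /\ t <> w.
  apply: NNPP => hn; apply: h; split; [exact hxw.1 | split; [exact hxw.2|]].
  move=> [t [h1 [h2 [h3 h4]]]]; apply: hn; exists t; tauto.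
have [|z [hz hzt]] := IH t _ (conj hxt hxt'); last first.
  by exists z; split => //; exact: (HW.2.2 _ _ _ hzt htw).
rewrite -ltnS; apply: leq_trans hk; apply: proper_card; apply/properP; split.
  apply/subsetP => s; rewrite !inE => /bPP hs; apply/bPP; exact: (HW.2.2 _ _ _ hs htw).
exists w; rewrite !inE; first by apply/bPP; apply HW.
apply/bPP => hwt; apply: htw'; exact: HW.2.1.
Qed.

Lemma same_up (x y : W) : (forall z, imm_succ x z <-> imm_succ y z) ->
  forall w, slt x w -> slt y w.
Proof.
move=> hs w hxw; have [z [hz hzw]] := exists_imm hxw.
have [hyz [hyz' _]] := (hs z).1 hz.
split; first exact: (HW.2.2 _ _ _ hyz hzw).
move=> eyw; subst w; apply: hyz'; exact: (HW.2.1 _ _ hyz hzw).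
Qed.

Variables x y : W.
Hypothesis hxy : x <> y.
Hypothesis hs : forall z, imm_succ x z <-> imm_succ y z.

Lemma hs' z : imm_succ y z <-> imm_succ x z.
Proof. by split => /hs. Qed.

Local Notation Qc := {z : W | z != y}.
Definition q0 : Qc := exist _ x (introN eqP hxy).
Definition qf (w : W) : Qc := insubd q0 w.
Definition rr (w : W) : W := if w == y then x else w.
Lemma val_qf w : val (qf w) = rr w.
Proof. by rewrite /qf val_insubd /rr; case: eqP. Qed.
Lemma rr_ny w : rr w <> y.
Proof. by rewrite /rr; case: eqP => // _ e; apply: hxy. Qed.
Lemma rr_id w : w <> y -> rr w = w.
Proof. by rewrite /rr; case: eqP. Qed.
Lemma qf_val (a : Qc) : qf (val a) = a.
Proof. apply: val_inj; rewrite val_qf rr_id //; apply/eqP; exact: (valP a). Qed.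

Definition RR (a b : W) : Prop := fle a b \/ (b = x /\ fle a y).
Definition qle (a b : Qc) : Prop := RR (val a) (val b).
Definition QU : fposet := @FPoset {: Qc} qle.

Lemma RR_refl a : RR a a.
Proof. by left; apply HW. Qed.

Lemma RR_antisym a b : a <> y -> b <> y -> RR a b -> RR b a -> a = b.
Proof.
move=> ay by_ [h1|[e1 h1]] [h2|[e2 h2]].
- exact: HW.2.1.
- subst a.
  case: (classic (x = b)) => // nxb.
  have := same_up hs (conj h1 nxb) => -[hyb _].
  by have := HW.2.1 _ _ h2 hyb.
- subst b. case: (classic (x = a)) => // nxa.
  have := same_up hs (conj h2 nxa) => -[hya _].
  by have := HW.2.1 _ _ h1 hya.
- by subst.
Qed.

Lemma RR_trans a b c : a <> y -> b <> y -> c <> y -> RR a b -> RR b c -> RR a c.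
Proof.
move=> ay by_ cy [h1|[e1 h1]] [h2|[e2 h2]].
- by left; apply: (HW.2.2 _ _ _ h1 h2).
- by right; split => //; apply: (HW.2.2 _ _ _ h1 h2).
- subst b. case: (classic (x = c)) => [<-|nxc]; first by right.
  have := same_up hs (conj h2 nxc) => -[hyc _].
  by left; apply: (HW.2.2 _ _ _ h1 hyc).
- by right.
Qed.

Lemma QU_poset : is_poset QU.
Proof.
have ny (a : Qc) : val a <> y by apply/eqP; exact: (valP a).
split; first by move=> a; exact: RR_refl.
split; first by move=> a b h1 h2; apply: val_inj; apply: RR_antisym.
move=> a b c; exact: RR_trans.
Qed.

Lemma rr_eq u v : rr u = rr v <-> (u = v \/ (u = x /\ v = y) \/ (u = y /\ v = x)).
Proof.
rewrite /rr; split.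
  case: (u =P y) => [eu|nu]; case: (v =P y) => [ev|nv] h.
  - by left; rewrite eu ev.
  - by right; right.
  - by right; left.
  - by left.
case=> [->//|[[-> ->]|[-> ->]]]; rewrite eqxx; case: eqP => // e; by case: hxy.
Qed.

Lemma rr_rr w : rr (rr w) = rr w.
Proof. by rewrite rr_id //; apply: rr_ny. Qed.

Lemma qle_char u v : qle (qf u) (qf v) <->
  exists u' v', [/\ qf u' = qf u, qf v' = qf v & fle u' v'].
Proof.
have qfE a b : qf a = qf b <-> rr a = rr b.
  by split => [e|e]; [rewrite -!val_qf e | apply: val_inj; rewrite !val_qf].
rewrite /qle !val_qf; split.
  case=> [h|[e h]].
  - by exists (rr u), (rr v); split => //; apply/qfE; rewrite rr_rr.
  - exists (rr u), y; split => //; first by apply/qfE; rewrite rr_rr.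
    by apply/qfE; rewrite e /rr eqxx.
move=> [u' [v' [/qfE e1 /qfE e2 h]]]; rewrite -e1 -e2 /rr.
case: (u' =P y) => [eu|nu]; case: (v' =P y) => [ev|nv].
- by left; apply HW.
- subst u'. case: (classic (y = v')) => [e|nyv]; first by case: nv.
  have := same_up hs' (conj h nyv) => -[hxv _]; by left.
- by subst v'; right.
- by left.
Qed.

Lemma qf_ker u v : qf u = qf v <-> (u = v \/ (u = x /\ v = y) \/ (u = y /\ v = x)).
Proof.
rewrite -rr_eq; split => [e|e]; first by rewrite -!val_qf e.
by apply: val_inj; rewrite !val_qf.
Qed.

Lemma beta_step : exists (U : fposet) (f : W -> U),
  [/\ is_poset U, beta_reduction f &
      forall u v, f u = f v <-> (u = v \/ (u = x /\ v = y) \/ (u = y /\ v = x))].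
Proof.
exists QU, qf; split; [exact: QU_poset | | exact: qf_ker].
exists x, y; split => //; first by move=> a; exists (val a); exact: qf_val.
  exact: qf_ker.
move=> a b; have := qle_char (val a) (val b); rewrite !qf_val; exact.
Qed.
End Generic.

Lemma red_img (W U : fposet) (g : W -> U) : reduces_to g ->
  (forall a, exists u, g u = a) /\
  (forall a b, fle a b <-> exists u v, [/\ g u = a, g v = b & fle u v]).
Proof.
elim=> [|U0 U' g0 f Hg [IHs IHo] HU' [x [y [_ _ fs _ fo]]]].
  split; first by move=> a; exists a.
  move=> a b; split; first by move=> h; exists a, b.
  by move=> [u [v [-> -> h]]].
split.
  move=> a; have [b <-] := fs a; have [u <-] := IHs b; by exists u.
move=> a b; rewrite fo; split.
  move=> [a' [b' [ea eb /IHo [u [v [eu ev h]]]]]]; exists u, v; split => //.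
    by rewrite eu. by rewrite ev.
move=> [u [v [ea eb h]]]; exists (g0 u), (g0 v); split => //.
by apply/IHo; exists u, v.
Qed.

Lemma imm_of_up (W : fposet) (x y : W) :
  (forall a, (fle x a /\ x <> a) <-> (fle y a /\ y <> a)) ->
  forall z, imm_succ x z <-> imm_succ y z.
Proof.
move=> h z; rewrite /imm_succ; split.
  move=> [h1 [h2 h3]]; have [h4 h5] := (h z).1 (conj h1 h2); split=>//; split=>//.
  move=> [w [hw1 [hw2 hw3]]]; apply: h3; exists w; have := (h w).2 (conj hw1 hw2); tauto.
move=> [h1 [h2 h3]]; have [h4 h5] := (h z).2 (conj h1 h2); split=>//; split=>//.
move=> [w [hw1 [hw2 hw3]]]; apply: h3; exists w; have := (h w).1 (conj hw1 hw2); tauto.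
Qed.

Section Spec.
Variable n : nat.
Variable V : {fset Yn n}.
Hypothesis hV : finite_Esubspace V.
Variable c : Esub V -> color n.
Hypothesis hc : weak_coloring c.

Local Notation N := (2 ^ n.+1).
Local Notation P := (Esub V).
Local Notation crt := (clos_refl_trans _ (@Yprec n)).

Definition lv (a : Yn n) : nat := if a is Some (m,_) then m else 0.

Lemma crt_lev a b : crt a b -> a = b \/ (a <> None /\ b <> None /\ lv b < lv a).
Proof.
elim => {a b} [a b|a|a b d _ IH1 _ IH2].
- case: a => [[m i]|]; case: b => [[m' j]|] //= [-> _]; right; split => //.
- by left.
- case: IH1 => [->//|[h1 [h2 h3]]]; case: IH2 => [<-|[h4 [h5 h6]]]; right => //.
  split => //; split => //; exact: ltn_trans h6 h3.
Qed.

Lemma noneV : None \notin V.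
Proof.
apply/negP => hN.
have hN0 : 0 < N by rewrite expn_gt0.
pose M := \max_(a : V) lv (val a).
have hin : Some (M.+1, Ordinal hN0) \in V by apply: (proj2 hV None) => //; left.
have := @leq_bigmax _ (fun a => lv (val a)) (FSetSub hin).
by rewrite /= -/M ltnn.
Qed.

Lemma valN (u : P) : val u <> None.
Proof. move=> e; move: (fsvalP u); rewrite e => h; by move: noneV; rewrite h. Qed.

Lemma fleE (u v : P) : fle u v <-> crt (val u) (val v).
Proof. split; [case => // e; by case: (valN e) | by right]. Qed.

Lemma fle_lev (u v : P) : fle u v -> u = v \/ lv (val v) < lv (val u).
Proof.
move=> /fleE /crt_lev [e|[_ [_ h]]]; last by right.
by left; apply: val_inj.
Qed.

Lemma P_poset : is_poset P.
Proof.
split; first by move=> u; apply/fleE; apply: rt_refl.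
split.
  move=> u v h1 h2; case: (fle_lev h1) => // l1; case: (fle_lev h2) => // l2.
  by have := ltn_trans l1 l2; rewrite ltnn.
move=> u v w /fleE h1 /fleE h2; apply/fleE; exact: rt_trans h1 h2.
Qed.

Lemma valS (u : P) : exists i, val u = Some (lv (val u), i).
Proof.
have := @valN u; case: (val u) => [[m i]|] // _; by exists i.
Qed.

Lemma fle_step (u v : P) m i j : val u = Some (m.+1, i) -> val v = Some (m, j) -> i <> j ->
  fle u v.
Proof. move=> eu ev ij; apply/fleE; rewrite eu ev; apply: rt_step => /=; done. Qed.

Definition full m := [forall i : 'I_N, Some (m,i) \in V].

Definition cc m (i : 'I_N) : color n :=
  if (insub (Some (m,i)) : option V) is Some u then c u else [ffun => false].

Lemma ccE (u : P) m i : val u = Some (m,i) -> cc m i = c u.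
Proof. by move=> e; rewrite /cc -e valK. Qed.

Fixpoint T m : {set 'I_N} :=
  if m is k.+1 then
    [set i in T k | full k && [exists i', (i' \in T k) && (i' != i) && (cc k i' == cc k i)]]
  else setT.

Definition key (a : Yn n) : (nat * color n) + Yn n :=
  if a is Some (m,i) then (if i \in T m then inl (m, cc m i) else inr a) else inr a.

Definition E (u v : P) : bool := key (val u) == key (val v).

Lemma Einv u v : E u v -> u = v \/ exists m i j,
  [/\ val u = Some (m,i), val v = Some (m,j), i \in T m, j \in T m & cc m i = cc m j].
Proof.
rewrite /E; case eu: (val u) => [[m i]|]; case ev: (val v) => [[m' j]|] //=.
- case hi: (i \in T m); case hj: (j \in T m') => /eqP //.
  + move=> [e1 e2]; subst m'; right; by exists m, i, j.
  + by move=> [e1 e2]; left; apply: val_inj; rewrite eu ev e1 e2.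
- by case: (i \in T m) => /eqP.
- by case: (j \in T m') => /eqP.
- by move=> _; left; apply: val_inj; rewrite eu ev.
Qed.

Lemma Eintro (u v : P) m i j : val u = Some (m,i) -> val v = Some (m,j) ->
  i \in T m -> j \in T m -> cc m i = cc m j -> E u v.
Proof. by move=> eu ev hi hj e; rewrite /E eu ev /= hi hj e. Qed.

Lemma E_lv (u v : P) : E u v -> lv (val u) = lv (val v).
Proof. by case/Einv => [->//|[m [i [j [-> -> _ _ _]]]]]. Qed.

Lemma E_c (u v : P) : E u v -> c u = c v.
Proof.
case/Einv => [->//|[m [i [j [eu ev _ _ e]]]]].
by rewrite -(ccE eu) -(ccE ev).
Qed.

Lemma E_trans (u v w : P) : E u v -> E v w -> E u w.
Proof. by rewrite /E => /eqP -> /eqP ->. Qed.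
Lemma E_sym (u v : P) : E u v -> E v u.
Proof. by rewrite /E eq_sym. Qed.

Definition leb (a b : color n) : bool := [forall k, a k ==> b k].

Lemma leb_refl a : leb a a.
Proof. by apply/forallP => k; apply/implyP. Qed.
Lemma leb_anti a b : leb a b -> leb b a -> a = b.
Proof.
move=> /forallP h1 /forallP h2; apply/ffunP => k.
by move: (h1 k) (h2 k); case: (a k); case: (b k).
Qed.

Lemma c_le (u v : P) : fle u v -> leb (c u) (c v).
Proof. by move/hc => h; apply/forallP. Qed.

Definition D (x : color n) := #|[set z : color n | leb z x]|.

Definition Inv m := exists x, D x < #|T m| /\
  forall i, i \in T m -> Some (m,i) \in V -> leb (cc m i) x.

Lemma Inv0 : Inv 0.
Proof.
exists [ffun => true]; split; last first.
  by move=> i _ _; apply/forallP => k; rewrite ffunE implybT.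
rewrite /= cardsT card_ord; apply: (leq_ltn_trans (max_card _)).
rewrite card_ffun card_bool card_ord.
have h : 0 < 2 ^ n by rewrite expn_gt0.
rewrite expnS; lia.
Qed.

Lemma Tpart m i : i \in T m.+1 ->
  [/\ full m, i \in T m & exists i', [/\ i' \in T m, i' != i & cc m i' = cc m i]].
Proof.
rewrite /= inE => /andP [hi /andP [fm /existsP [i' /andP [/andP [h1 h2] /eqP h3]]]].
by split => //; exists i'.
Qed.

Lemma Tin m i i' : full m -> i \in T m -> i' \in T m -> i' != i ->
  cc m i' = cc m i -> i \in T m.+1.
Proof.
move=> fm hi hi' ne e; rewrite /= inE hi fm /=; apply/existsP; exists i'.
by rewrite hi' ne e eqxx.
Qed.

Lemma Tsub m : T m.+1 \subset T m.
Proof. by apply/subsetP => i /Tpart []. Qed.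

Lemma fullP m : full m -> forall i, Some (m,i) \in V.
Proof. by move/forallP. Qed.

Lemma Inv_step m : full m -> Inv m -> Inv m.+1.
Proof.
move=> fm [x [hD hx]].
pose y : color n := [ffun b => [forall k in T m, cc m k b]].
have yle k : k \in T m -> leb y (cc m k).
  move=> hk; apply/forallP => b; rewrite ffunE; apply/implyP => /forall_inP; exact.
have clex k : k \in T m -> leb (cc m k) x by move=> hk; apply: hx => //; exact: fullP.
exists y; split; last first.
  move=> i hi hv; have [_ hiT [i' [hi' ne ce]]] := Tpart hi.
  apply/forallP => b; rewrite ffunE; apply/implyP => hb; apply/forall_inP => k hk.
  have [k' [hk' nk' ck']] : exists k', [/\ k' \in T m, k' != i & cc m k' = cc m k].
    case: (eqVneq k i) => [->|nki]; first by exists i'.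
    by exists k.
  rewrite -ck'.
  have hw := fullP fm k'.
  have ne' : i <> k' by move=> e; rewrite e eqxx in nk'.
  have hle := c_le (@fle_step (FSetSub hv) (FSetSub hw) m i k' erefl erefl ne').
  rewrite -(@ccE (FSetSub hv) m.+1 i erefl) -(@ccE (FSetSub hw) m k' erefl) in hle.
  by move/forallP: hle => /(_ b); rewrite hb.
set Tm := T m; set T1 := T m.+1.
rewrite -/Tm in hD.
pose C := [set cc m i | i in Tm].
have H1 : #|Tm| <= #|T1| + #|C|.
  have s1 : T1 \subset Tm by exact: Tsub.
  have e1 : #|Tm| = #|T1| + #|Tm :\: T1|.
    rewrite cardsD (setIidPr s1); have := subset_leq_card s1; lia.
  rewrite e1 leq_add2l.
  rewrite -(@card_in_imset _ _ (cc m)); first by apply: subset_leq_card; apply: imsetS; apply/subsetP => i /setDP [].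
  move=> i j /setDP [hi ni] /setDP [hj nj] e.
  apply/eqP; apply: contraT => nij.
  by have := Tin fm hj hi nij e; rewrite (negbTE nj).
have Cy z : z \in C -> leb y z by move=> /imsetP [k hk ->]; exact: yle.
have Cx z : z \in C -> leb z x by move=> /imsetP [k hk ->]; exact: clex.
have Dpos w : 0 < D w by apply/card_gt0P; exists w; rewrite inE leb_refl.
have [k0 hk0] : exists k0, k0 \in Tm.
  have : 0 < #|Tm| by have := Dpos x; lia.
  by move/card_gt0P => [k hk]; exists k.
have yx : leb y x.
  apply/forallP => b; apply/implyP => hb.
  move/forallP: (clex _ hk0) => /(_ b) /implyP; apply.
  by move/forallP: (yle _ hk0) => /(_ b) /implyP; apply.
have CDx : #|C| <= D x.
  by apply: subset_leq_card; apply/subsetP => z hz; rewrite inE; exact: Cx.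
case: (eqVneq y x) => [eyx|nyx].
  (* all colors equal *)
  have sub : Tm \subset T1.
    apply/subsetP => i hi.
    have : 0 < #|[predD1 Tm & i]|.
      have := cardD1 i Tm; rewrite hi; have := Dpos x; lia.
    move/card_gt0P => [k hk'].
    have /andP [nki hk] : (k != i) && (k \in Tm) by exact: hk'.
    apply: (Tin fm hi hk nki).
    have ek : cc m k = x by apply: leb_anti; [exact: clex | rewrite -eyx; exact: yle].
    have ei : cc m i = x by apply: leb_anti; [exact: clex | rewrite -eyx; exact: yle].
    by rewrite ek ei.
  rewrite -eyx in hD; have := subset_leq_card sub; lia.
have [b1 hb1] : exists b1, x b1 && ~~ y b1.
  apply/existsP; apply: contraNT nyx => /existsPn h; apply/eqP/ffunP => b.
  move: (h b) (forallP yx b); case: (x b); case: (y b) => //.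
case: (eqVneq y [ffun => false]) => [ey0|ny0].
  have Dy1 : D y <= 1.
    rewrite -(cards1 y); apply: subset_leq_card; apply/subsetP => z; rewrite !inE => hz.
    apply/eqP; apply: leb_anti => //; rewrite ey0; apply/forallP => b.
    by rewrite ffunE.
  have : 0 < #|T1| by lia.
  move/card_gt0P => [i hi]; have [_ hiT [i' [hi' ne ce]]] := Tpart hi.
  have hi1' : i' \in T1 by apply: (Tin fm hi' hiT) => //; rewrite eq_sym.
  have : #|[set i; i']| <= #|T1|.
    by apply: subset_leq_card; apply/subsetP => z; move=> /set2P [] ->.
  rewrite cards2 eq_sym ne; lia.
have [b0 hb0] : exists b0, y b0.
  apply/existsP; apply: contraNT ny0 => /existsPn h; apply/eqP/ffunP => b.
  by rewrite [RHS]ffunE; exact: negbTE (h b).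
have nb : b1 != b0 by apply: contraTneq hb1 => ->; rewrite hb0 andbF.
pose z : color n := [ffun b => x b && (b != b0)].
pose Dy := [set w : color n | leb w y].
pose A := C :|: (Dy :\ y).
have dis : C :&: (Dy :\ y) = set0.
  apply/setP => w; rewrite !inE; apply/negbTE; apply/negP => /andP [hC /andP [nwy hwy]].
  by move/eqP: nwy; apply; apply: leb_anti => //; exact: Cy.
have zA : z \notin A.
  rewrite !inE negb_or; apply/andP; split.
    apply/negP => /Cy /forallP /(_ b0); rewrite hb0 ffunE eqxx andbF //.
  rewrite negb_and; apply/orP; right; apply/negP => /forallP /(_ b1).
  by rewrite ffunE nb andbT; move/andP: hb1 => [-> /negbTE ->].
have zAx : z |: A \subset [set w | leb w x].
  apply/subsetP => w; rewrite !inE => /orP [/eqP ->|/orP [/Cx //|/andP [_ hw]]].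
    by apply/forallP => b; rewrite ffunE; apply/implyP => /andP [].
  apply/forallP => b; apply/implyP => hwb.
  move/forallP: yx => /(_ b) /implyP; apply.
  by move/forallP: hw => /(_ b) /implyP; apply.
have cA : #|A| = #|C| + #|Dy :\ y|.
  by rewrite cardsU dis cards0 subn0.
have cDy : #|Dy| = (#|Dy :\ y|).+1.
  by rewrite (cardsD1 y Dy) inE leb_refl.
have := subset_leq_card zAx; rewrite cardsU1 zA cA.
rewrite -/(D x) -/(D y) in hD *.
change (#|Dy|) with (D y) in cDy.
lia.
Qed.

Lemma N_gt1 : 1 < N.
Proof. have h : 0 < 2 ^ n by rewrite expn_gt0. rewrite expnS; lia. Qed.

Lemma full_down m : full m.+1 -> full m.
Proof.
move=> fm; apply/forallP => j.
have h0 : 0 < N by rewrite expn_gt0.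
pose i0 : 'I_N := Ordinal h0; pose i1 : 'I_N := Ordinal N_gt1.
pose i := if j == i0 then i1 else i0.
have nij : i <> j.
  rewrite /i; case: eqP => [->|nj] e; last by apply: nj; rewrite e.
  by move: e => /(congr1 val).
apply: (proj2 hV (Some (m.+1, i))); first exact: fullP fm i.
by right; apply: rt_step.
Qed.

Lemma full_le m k : full m -> k <= m -> full k.
Proof.
elim: m => [|m IH] fm hk; first by move: hk; rewrite leqn0 => /eqP ->.
case: (ltngtP k m.+1) => hl //; [ by apply: IH; [exact: full_down | lia] | lia | by rewrite hl].
Qed.

Lemma Inv_all m : (forall k, k < m -> full k) -> Inv m.
Proof.
elim: m => [|m IH] h; first exact: Inv0.
apply: Inv_step; first exact: h.
by apply: IH => k hk; apply: h; exact: ltnW.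
Qed.

Lemma T_nonempty m : full m -> exists i, i \in T m.+1.
Proof.
move=> fm; have [x [hD _]] := @Inv_all m.+1 (fun k (hk : k < m.+1) => full_le fm (hk : k <= m)).
have : 0 < #|T m.+1| by lia.
by move/card_gt0P => [i hi]; exists i.
Qed.

Definition Bset (U : fposet) (g : P -> U) :=
  [set p : P * P | E p.1 p.2 && (g p.1 != g p.2)].

Lemma loop k : forall (U : fposet) (g : P -> U), reduces_to g -> is_poset U ->
  (forall u v, g u = g v -> E u v) -> #|Bset g| < k ->
  exists (U' : fposet) (g' : P -> U'), reduces_to g' /\
    (forall u v, E u v -> g' u = g' v) /\ (forall u v, g' u = g' v -> E u v).
Proof.
elim: k => // k IH U g Hg HU Hk Hcnt.
have [img ord] := red_img Hg.
case: (set_0Vmem (Bset g)) => [B0 | [p hp]].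
  exists U, g; split => //; split => // u v huv; apply/eqP; apply: contraT => ne.
  have : (u, v) \in Bset g by rewrite inE huv ne.
  by rewrite B0 inE.
have exP : exists m, [exists q in Bset g, lv (val q.1) == m].
  by exists (lv (val p.1)); apply/existsP; exists p; rewrite hp eqxx.
case: (ex_minnP exP) => m /existsP [q /andP [hq /eqP hm]] hmin.
have Mg a b : E a b -> lv (val a) < m -> g a = g b.
  move=> hab hl; apply/eqP; apply: contraT => ne.
  have : [exists q in Bset g, lv (val q.1) == lv (val a)].
    by apply/existsP; exists (a, b); rewrite inE hab ne eqxx.
  by move/hmin; lia.
have L2 u v : fle (g u) (g v) -> g u = g v \/ lv (val v) < lv (val u).
  move=> /ord [u' [v' [eu ev h]]].
  have Eu := Hk _ _ eu; have Ev := Hk _ _ ev.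
  case: (fle_lev h) => [e|l]; first by left; rewrite -eu -ev e.
  by right; rewrite -(E_lv Eu) -(E_lv Ev).
have L1 : forall m', m' <= m -> forall i, i \in T m' -> forall u : P, val u = Some (m', i) ->
    forall v : P, lv (val v) < m' -> fle (g u) (g v).
  elim => [//|k' IHk] hk' i hi u eu v hv.
  have [fk hiT [i' [hi' ne ce]]] := Tpart hi.
  have hk1 := fullP fk i; have hk2 := fullP fk i'.
  have Eg : g (FSetSub hk1) = g (FSetSub hk2).
    apply: Mg; last by rewrite /=; lia.
    exact: (@Eintro (FSetSub hk1) (FSetSub hk2) k' i i' erefl erefl hiT hi' (esym ce)).
  have A j (w : P) : val w = Some (k', j) -> fle (g u) (g w).
    move=> ew; case: (eqVneq j i) => [ej|nj].
      subst j; have -> : w = FSetSub hk1 by apply: val_inj; rewrite ew.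
      rewrite Eg; apply/ord; exists u, (FSetSub hk2); split => //.
      by apply: (@fle_step u (FSetSub hk2) k' i i' eu erefl) => e; rewrite e eqxx in ne.
    apply/ord; exists u, w; split => //.
    by apply: (fle_step eu ew) => e; rewrite e eqxx in nj.
  have [j ev] := valS v.
  case: (ltngtP (lv (val v)) k') => hl.
  - apply: (HU.2.2 _ _ _ (A i (FSetSub hk1) erefl)).
    exact: (IHk (ltnW hk') i hiT (FSetSub hk1) erefl v hl).
  - lia.
  - by apply: (A j); rewrite ev hl.
have [hq1 hq2] : E q.1 q.2 /\ g q.1 != g q.2 by move: hq; rewrite inE => /andP.
have [eq12|[m0 [i [j [e1 e2 hi hj _]]]]] := Einv hq1.
  by rewrite eq12 eqxx in hq2.
rewrite e1 /= in hm; subst m0.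
have SU (u : P) i0 : val u = Some (m, i0) -> i0 \in T m -> forall a,
    (fle (g u) a /\ g u <> a) <-> exists v, g v = a /\ lv (val v) < m.
  move=> eu hi0 a; split.
    move=> [h1 h2]; have [v ev] := img a; subst a; exists v; split => //.
    by case: (L2 _ _ h1) => // ; rewrite eu.
  move=> [v [<- hv]]; split; first exact: (L1 m (leqnn m) i0 hi0 u eu v hv).
  move=> e; have := E_lv (Hk _ _ e); rewrite eu /= => el; by rewrite -el ltnn in hv.
have hs : forall z, imm_succ (g q.1) z <-> imm_succ (g q.2) z.
  apply: imm_of_up => a; rewrite (SU _ _ e1 hi) (SU _ _ e2 hj); done.
have hxy : g q.1 <> g q.2 by move/eqP; rewrite (negbTE hq2).
have [U' [f [HU' Hf kerf]]] := beta_step HU hxy hs.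
apply: (IH U' (fun x => f (g x))).
- exact: red_step Hg HU' Hf.
- exact: HU'.
- move=> a b /kerf [/Hk //|[[ea eb]|[ea eb]]].
  + apply: (E_trans (Hk _ _ ea)); apply: (E_trans hq1); apply: E_sym; exact: Hk.
  + apply: (E_trans (Hk _ _ ea)); apply: (E_trans (E_sym hq1)); apply: E_sym; exact: Hk.
- rewrite -ltnS; apply: leq_trans Hcnt; apply: proper_card; apply/properP; split.
    apply/subsetP => r; rewrite !inE => /andP [h1 h2]; rewrite h1 /=.
    by apply: contraNneq h2 => ->.
  exists q => //; rewrite inE negb_and negbK; apply/orP; right.
  by apply/eqP/kerf; right; left.
Qed.
End Spec.

Local Open Scope fset_scope.

Theorem mainTheorem8 (n : nat) (V : {fset Yn n}) :
  finite_Esubspace V ->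
  forall c : Esub V -> color n,
    weak_coloring c ->
    exists (U : fposet) (g : Esub V -> U),
      [/\ reduces_to g,
          (forall u v : Esub V, g u = g v -> c u = c v) &
          (forall m : nat,
             (forall i : 'I_(2 ^ n.+1), Some (m, i) \in V) ->
             exists (i j : 'I_(2 ^ n.+1)) (u v : Esub V),
               [/\ (i < j)%N, val u = Some (m, i), val v = Some (m, j) & g u = g v])].
Proof.
move=> hV c hc.
have [k hk] := ubnP #|Bset c (fun x : Esub V => x)|.
have kid : forall u v : Esub V, (fun x => x) u = (fun x => x) v -> E c u v.
  by move=> u v e; rewrite /E e eqxx.
have [U [g [Hg [EK KE]]]] := loop hV (red_refl (Esub V)) (P_poset hV) kid hk.
exists U, g; split => //.
  by move=> u v /KE; exact: E_c.
move=> m hm.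
have fm : full V m by apply/forallP.
have [i hi] := T_nonempty hV hc fm.
have [_ hiT [i' [hi' ne ce]]] := Tpart hi.
have h1 := fullP fm i; have h2 := fullP fm i'.
have Eg : g (FSetSub h1) = g (FSetSub h2).
  apply: EK; exact: (@Eintro _ _ c (FSetSub h1) (FSetSub h2) m i i' erefl erefl hiT hi' (esym ce)).
case: (ltngtP i i') => hl.
- by exists i, i', (FSetSub h1), (FSetSub h2).
- by exists i', i, (FSetSub h2), (FSetSub h1).
- by move: ne; rewrite (val_inj hl) eqxx.
Qed.
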